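(* Let $A$ be a basic connected finite dimensional algebra over an algebraically closed field $k$ with ordinary quiver $Q$ without oriented cycles, and let $\nu\colon kQ\twoheadrightarrow A$ be a presentation with kernel $I$. Regard $\mathsf{Hom}(\pi_1(Q,I),k^+)$ as an abelian Lie algebra (zero bracket). Then $\theta_\nu\colon\mathsf{Hom}(\pi_1(Q,I),k^+)\to\mathsf{HH}^1(A)$ is a Lie algebra homomorphism; in particular $\mathsf{Im}(\theta_\nu)$ is an abelian Lie subalgebra of $\mathsf{HH}^1(A)$.
   Context: Fix a complete set $e_1,\dots,e_n$ of primitive orthogonal idempotents of $A$ (indexed by $Q_0=\{1,\dots,n\}$), $E=\bigoplus ke_i$. A presentation is a surjective algebra homomorphism $\nu\colon kQ\twoheadrightarrow A$ with admissible kernel (i.e. $(kQ^+)^N\subseteq\mathsf{Ker}\,\nu\subseteq(kQ^+)^2$ for some $N\ge2$, $kQ^+$ the arrow ideal) and $\nu(e_i)=e_i$. Walks are paths in $Q$ with formal inverses of arrows allowed. The homotopy relation $\sim_I$ is the smallest equivalence relation on walks with $\alpha\alpha^{-1}\sim_I e_y$, $\alpha^{-1}\alpha\sim_I e_x$ for arrows $\alpha\colon x\to y$, compatible with concatenation ($v\sim_I v'\Rightarrow wvu\sim_I wv'u$), and with $u\sim_I v$ for paths $u,v$ occurring with nonzero coefficient in a same minimal relation of $I$ (a nonzero $\sum t_iu_i\in I$, $t_i\ne0$, distinct paths, no nonempty proper subsum in $I$). With a fixed base vertex $x_0$, $\pi_1(Q,I)$ is the group of classes of closed walks at $x_0$.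 $\mathsf{HH}^1(A)$ is identified with $Der_0(A)/Int_0(A)$, where $Der_0(A)$ consists of derivations vanishing on all $e_i$ (Lie bracket: commutator) and $Int_0(A)=\{a\mapsto ea-ae\mid e\in E\}$. Fix a maximal tree $T$ of $Q$ and let $\gamma_x$ be the minimal walk in $T$ from $x_0$ to $x$. For $f\colon\pi_1(Q,I)\to k^+$ a group homomorphism, $\theta_\nu(f)$ is the class of the derivation $\tilde f$ with $\tilde f(\nu(u))=f([\gamma_y^{-1}u\gamma_x]_I)\nu(u)$ for all paths $u$ from $x$ to $y$. *)

(* Defs.v *)
From HB Require Import structures.
From mathcomp Require Import all_boot all_order all_algebra all_field.
From Stdlib Require Import Relation_Operators.
Set Implicit Arguments. Unset Strict Implicit. Unset Printing Implicit Defensive.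
Import GRing.Theory.
Local Open Scope ring_scope.

(* A walk is a start vertex together with the list of its steps, in     *)
(* order of traversal; a step (a, true) is the arrow a, (a, false) is   *)
(* its formal inverse a^{-1}.  A path is a start vertex with a list of  *)
(* arrows in order of traversal.                                        *)
Section Quiver.
Variables (n : nat) (Q1 : finType) (src tgt : Q1 -> 'I_n).

Definition step := (Q1 * bool)%type.
Definition st_src (s : step) : 'I_n := if s.2 then src s.1 else tgt s.1.
Definition st_tgt (s : step) : 'I_n := if s.2 then tgt s.1 else src s.1.
Definition step_inv (s : step) : step := (s.1, ~~ s.2).

Definition walk := ('I_n * seq step)%type.
Definition wend (w : walk) : 'I_n := last w.1 (map st_tgt w.2).

Fixpoint steps_valid (x : 'I_n) (l : seq step) : bool :=
  match l with
  | [::] => true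
  | s :: l' => (st_src s == x) && steps_valid (st_tgt s) l'
  end.
Definition wvalid (w : walk) : bool := steps_valid w.1 w.2.

(* wcat v w : first traverse v, then w  (written  w v  in the paper) *)
Definition wcat (v w : walk) : walk := (v.1, v.2 ++ w.2).
Definition winv (w : walk) : walk := (wend w, rev (map step_inv w.2)).

Definition qpath := ('I_n * seq Q1)%type.
Definition path_walk (u : qpath) : walk := (u.1, map (fun a => (a, true)) u.2).
Definition pvalid (u : qpath) : bool := wvalid (path_walk u).
Definition pend (u : qpath) : 'I_n := wend (path_walk u).

Definition no_oriented_cycles : Prop :=
  forall u : qpath, pvalid u -> u.2 != [::] -> pend u != u.1.

Definition in_arrows (T : {set Q1}) (w : walk) : bool :=
  all (fun s : step => s.1 \in T) w.2.
Fixpoint reduced_steps (l : seq step) : bool :=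
  match l with
  | s1 :: ((s2 :: _) as l') => (s2 != step_inv s1) && reduced_steps l'
  | _ => true
  end.

Definition maximal_tree (T : {set Q1}) : Prop :=
  (forall x y : 'I_n, exists w : walk,
      [/\ wvalid w, in_arrows T w, w.1 = x & wend w = y]) /\
  (forall w : walk, wvalid w -> in_arrows T w -> reduced_steps w.2 ->
      wend w = w.1 -> w.2 = [::]).

Definition minimal_tree_walk (T : {set Q1}) (x0 x : 'I_n) (g : walk) : Prop :=
  [/\ wvalid g, in_arrows T g, g.1 = x0, wend g = x &
      forall w : walk, wvalid w -> in_arrows T w -> w.1 = x0 -> wend w = x ->
        (size g.2 <= size w.2)%N].

Definition closed_at (x0 : 'I_n) (w : walk) : bool :=
  [&& wvalid w, w.1 == x0 & wend w == x0].

End Quiver.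

(* The algebra side.  A presentation nu : kQ ->> A with nu(e_i) = e_i   *)
(* is given (universal property of the path algebra) by the images     *)
(* nu a in e_{tgt a} A e_{src a} of the arrows; the image of a path    *)
(* a_1 ... a_m (traversal order) starting at x is                      *)
(* nu a_m * ... * nu a_1 * e_x.  An element of kQ is represented by a  *)
(* finite list of (valid, pairwise distinct) paths with coefficients.  *)
Section Algebra.
Variables (n : nat) (Q1 : finType) (src tgt : Q1 -> 'I_n).
Variables (k : fieldType) (A : falgType k) (e : 'I_n -> A) (nu : Q1 -> A).

Definition nupath (u : qpath n Q1) : A :=
  foldl (fun acc a => nu a * acc) (e u.1) u.2.

Definition combo := seq (qpath n Q1 * k).
Definition combo_ok (l : combo) : bool :=
  uniq (map fst l) && all (fun c => pvalid src tgt c.1) l.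
Definition combo_val (l : combo) : A := \sum_(c <- l) c.2 *: nupath c.1.

Definition complete_primitive_orthogonal : Prop :=
  [/\ \sum_i e i = 1,
      forall i, e i * e i = e i,
      forall i j, i != j -> e i * e j = 0 &
      forall i, e i != 0 /\
        forall f : A, f * f = f -> f = e i * f * e i -> f = 0 \/ f = e i].

(* A is basic : e_i A and e_j A are non-isomorphic for i <> j *)
Definition basic_wrt : Prop :=
  forall i j, i != j ->
    ~ exists a b : A, [/\ a = e j * a * e i, b = e i * b * e j,
                          a * b = e j & b * a = e i].

Definition connected_algebra : Prop :=
  forall c : A, c * c = c -> (forall a, c * a = a * c) -> c = 0 \/ c = 1.

Definition admissible_presentation : Prop :=
  [/\ forall a, nu a = e (tgt a) * nu a * e (src a),
      forall a : A, exists l : combo, combo_ok l /\ a = combo_val l &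
      exists N : nat, (2 <= N)%N /\
        (* (kQ^+)^N is contained in Ker nu *)
        (forall u, pvalid src tgt u -> (N <= size u.2)%N -> nupath u = 0) /\
        (* Ker nu is contained in (kQ^+)^2 *)
        (forall l : combo, combo_ok l -> combo_val l = 0 ->
           forall c, c \in l -> (size c.1.2 < 2)%N -> c.2 = 0)].

Definition minimal_relation (l : combo) : Prop :=
  [/\ combo_ok l, l != [::], all (fun c => c.2 != 0) l, combo_val l = 0 &
      forall m : bitseq, size m = size l ->
        mask m l != [::] -> (size (mask m l) < size l)%N ->
        combo_val (mask m l) != 0].

Inductive hgen : walk n Q1 -> walk n Q1 -> Prop :=
| hg_inv_r (a : Q1) : hgen (tgt a, [:: (a, false); (a, true)]) (tgt a, [::])
| hg_inv_l (a : Q1) : hgen (src a, [:: (a, true); (a, false)]) (src a, [::])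
| hg_rel (l : combo) (u v : qpath n Q1) :
    minimal_relation l -> u \in map fst l -> v \in map fst l ->
    hgen (path_walk u) (path_walk v).

Inductive hstep : walk n Q1 -> walk n Q1 -> Prop :=
| hs_ctx (x : 'I_n) (p q : seq (step Q1)) (v v' : walk n Q1) :
    hgen v v' -> v.1 = wend src tgt (x, p) -> v'.1 = wend src tgt (x, p) ->
    wvalid src tgt (x, p ++ v.2 ++ q) -> wvalid src tgt (x, p ++ v'.2 ++ q) ->
    hstep (x, p ++ v.2 ++ q) (x, p ++ v'.2 ++ q).

Definition homotopic : walk n Q1 -> walk n Q1 -> Prop :=
  clos_refl_sym_trans (walk n Q1) hstep.

(* a group homomorphism pi_1(Q, I) -> k^+, given on representatives *)
Definition pi1_hom (x0 : 'I_n) (F : walk n Q1 -> k) : Prop :=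
  (forall w1 w2, closed_at src tgt x0 w1 -> closed_at src tgt x0 w2 ->
     homotopic w1 w2 -> F w1 = F w2) /\
  (forall w1 w2, closed_at src tgt x0 w1 -> closed_at src tgt x0 w2 ->
     F (wcat w1 w2) = F w1 + F w2).

Definition der0 (D : A -> A) : Prop :=
  [/\ forall (c : k) (a b : A), D (c *: a + b) = c *: D a + D b,
      forall a b : A, D (a * b) = D a * b + a * D b &
      forall i, D (e i) = 0].

Definition int0 (D : A -> A) : Prop :=
  exists c : 'I_n -> k,
    forall a : A, D a = (\sum_i c i *: e i) * a - a * (\sum_i c i *: e i).

Definition der_bracket (D1 D2 : A -> A) : A -> A :=
  fun a => D1 (D2 a) - D2 (D1 a).

(* D is the derivation  f~  attached to F (via the tree walks gamma) *)
Definition tilde_der (gamma : 'I_n -> walk n Q1) (F : walk n Q1 -> k)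
  (D : A -> A) : Prop :=
  forall u : qpath n Q1, pvalid src tgt u ->
    D (nupath u) =
      F (wcat (wcat (gamma u.1) (path_walk u)) (winv src tgt (gamma (pend src tgt u))))
        *: nupath u.

End Algebra.

(* Main.v *)
Require Import Defs.
From HB Require Import structures.
From mathcomp Require Import all_boot all_order all_algebra all_field.
From Stdlib Require Import Relation_Operators Classical.
From mathcomp Require Import zify.
Import GRing.Theory.
Local Open Scope ring_scope.
Set Implicit Arguments. Unset Strict Implicit. Unset Printing Implicit Defensive.

Section Walks.
Variables (k : fieldType) (A : falgType k) (n : nat) (Q1 : finType) (src tgt : Q1 -> 'I_n).
Variables (e : 'I_n -> A) (nu : Q1 -> A).

Local Notation sv := (steps_valid src tgt).
Local Notation stt := (st_tgt src tgt).
Local Notation sts := (st_src src tgt).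

Lemma sv_cat x l1 l2 : sv x (l1 ++ l2) = sv x l1 && sv (last x (map stt l1)) l2.
Proof.
elim: l1 x => [|s l1 IH] x //=.
by rewrite IH andbA.
Qed.

Lemma last_catm x l1 l2 :
  last x (map stt (l1 ++ l2)) = last (last x (map stt l1)) (map stt l2).
Proof. by rewrite map_cat last_cat. Qed.

Lemma sts_inv s : sts (step_inv s) = stt s.
Proof. by case: s => a [] . Qed.
Lemma stt_inv s : stt (step_inv s) = sts s.
Proof. by case: s => a [] . Qed.

Lemma sv_inv x l : sv x l ->
  sv (last x (map stt l)) (rev (map (@step_inv Q1) l)) /\
  last (last x (map stt l)) (map stt (rev (map (@step_inv Q1) l))) = x.
Proof.
elim: l x => [|s l IH] x //=.
case/andP => /eqP <- /IH [H1 H2].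
rewrite rev_cons -cats1 sv_cat H1 last_catm H2 /= sts_inv eqxx stt_inv; split => //.
Qed.

Lemma sv_cancel x p s q : sv x (p ++ [:: s, step_inv s & q]) -> sv x (p ++ q).
Proof.
rewrite !sv_cat /= => /and3P [-> /eqP Hs /andP [_ Hq]].
by move: Hq; rewrite stt_inv Hs.
Qed.

Lemma hom_cancel1 x p s q : sv x (p ++ [:: s, step_inv s & q]) ->
  homotopic src tgt e nu (x, p ++ [:: s, step_inv s & q]) (x, p ++ q).
Proof.
move=> H. have H' := sv_cancel H.
have H0 := H.
move: H0; rewrite sv_cat => /andP [_] /= /andP [/eqP Hs _].
apply: rst_step.
case: s Hs H => a [] /= Hs H.
- have := hs_ctx (x:=x) (p:=p) (q:=q) (hg_inv_l src tgt e nu a).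
  by apply => //=.
- have := hs_ctx (x:=x) (p:=p) (q:=q) (hg_inv_r src tgt e nu a).
  by apply => //=.
Qed.

Lemma sv_drop x p l q : sv x (p ++ l ++ rev (map (@step_inv Q1) l) ++ q) -> sv x (p ++ q).
Proof.
rewrite !sv_cat => /and4P [Hp Hl Hr Hq].
have [_ E] := sv_inv Hl. by rewrite E in Hq; rewrite Hp Hq.
Qed.

Lemma hom_cancel l x p q :
  sv x (p ++ l ++ rev (map (@step_inv Q1) l) ++ q) ->
  homotopic src tgt e nu (x, p ++ l ++ rev (map (@step_inv Q1) l) ++ q) (x, p ++ q).
Proof.
elim: l p q => [|s l IH] p q /=.
  move=> _; exact: rst_refl.
have E : p ++ s :: l ++ rev (map (@step_inv Q1) (s :: l)) ++ q =
   (p ++ [:: s]) ++ l ++ rev (map (@step_inv Q1) l) ++ ([:: step_inv s] ++ q).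
  by rewrite /= rev_cons -cats1 -!catA /=.
rewrite E => H.
apply: rst_trans; first exact: IH H.
have E2 : (p ++ [:: s]) ++ [:: step_inv s] ++ q = p ++ [:: s, step_inv s & q].
  by rewrite -catA.
rewrite E2; apply: hom_cancel1.
by rewrite -E2; apply: sv_drop H.
Qed.



Hypothesis He1 : forall i, e i * e i = e i.
Hypothesis He0 : forall i j, i != j -> e i * e j = 0.
Hypothesis Hnu : forall a, nu a = e (tgt a) * nu a * e (src a).

Local Notation np := (nupath e nu).
Local Notation pend := (pend src tgt).
Local Notation pvalid := (pvalid src tgt).
Local Notation mk := (fun a : Q1 => (a, true)).

Definition U l := foldl (fun acc a => nu a * acc) 1 l.

Lemma foldl_nu c l : foldl (fun acc a => nu a * acc) c l = U l * c.
Proof.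
rewrite /U; elim: l c => [|a l IH] c /=; first by rewrite mul1r.
by rewrite IH [in RHS]IH mulr1 mulrA.
Qed.

Lemma nupathE u : np u = U u.2 * e u.1.
Proof. by rewrite /nupath foldl_nu. Qed.

Lemma ee i j : e i * e j = if i == j then e i else 0.
Proof. by case: eqP => [->|/eqP]; [exact: He1 | exact: He0]. Qed.

Lemma nupath_e u x : np u * e x = if u.1 == x then np u else 0.
Proof. by rewrite nupathE -mulrA ee; case: eqP => _; rewrite ?mulr0. Qed.

Lemma pendE u : pend u = last u.1 (map tgt u.2).
Proof. by case: u => x l; rewrite /Defs.pend /wend /path_walk /= -map_comp. Qed.

Lemma e_nupath u y : e y * np u = if pend u == y then np u else 0.
Proof.
case: u => x l; rewrite pendE /=; case/lastP: l => [|l b].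
  by rewrite /nupath /= ee; case: eqP => [->|/eqP H]; rewrite ?eqxx // eq_sym (negbTE H).
rewrite /nupath foldl_rcons /= map_rcons last_rcons mulrA {1}Hnu !mulrA ee eq_sym.
by case: eqP => [<-|_]; rewrite ?mul0r // -Hnu.

Qed.

Lemma nupath_mul u v : np u * np v =
  if pend v == u.1 then np (v.1, v.2 ++ u.2) else 0.
Proof.
rewrite (nupathE u) -mulrA e_nupath; case: eqP => _; last by rewrite mulr0.
by rewrite /nupath foldl_cat (foldl_nu _ u.2).
Qed.

Lemma pvalidE u : pvalid u = sv u.1 (map mk u.2).
Proof. by []. Qed.

Lemma pend_map u : last u.1 (map stt (map mk u.2)) = pend u.
Proof. by []. Qed.

Lemma pvalid_cat u v : pvalid v -> pvalid u -> pend v = u.1 ->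
  pvalid (v.1, v.2 ++ u.2) /\ pend (v.1, v.2 ++ u.2) = pend u.
Proof.
rewrite !pvalidE /Defs.pend /wend /path_walk /= map_cat sv_cat => -> Hu Hp.
by rewrite /Defs.pend /wend /path_walk /= in Hp; rewrite Hp Hu last_catm Hp.
Qed.



Variables (x0 : 'I_n) (gamma : 'I_n -> walk n Q1) (F : walk n Q1 -> k).
Hypothesis Hg1 : forall x, wvalid src tgt (gamma x).
Hypothesis Hg2 : forall x, (gamma x).1 = x0.
Hypothesis Hg3 : forall x, wend src tgt (gamma x) = x.
Hypothesis HF : pi1_hom src tgt e nu x0 F.

Definition W u := wcat (wcat (gamma u.1) (path_walk u)) (winv src tgt (gamma (pend u))).
Definition phi u := F (W u).

Lemma WE u : W u = (x0, (gamma u.1).2 ++ map mk u.2 ++ rev (map (@step_inv Q1) (gamma (pend u)).2)).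
Proof. by rewrite /W /wcat /winv /= Hg2 catA. Qed.

Lemma gv x : sv x0 (gamma x).2.
Proof. by have := Hg1 x; rewrite /wvalid Hg2. Qed.
Lemma ge x : last x0 (map stt (gamma x).2) = x.
Proof. by have := Hg3 x; rewrite /wend Hg2. Qed.
Lemma giv x : sv x (rev (map (@step_inv Q1) (gamma x).2)) /\
   last x (map stt (rev (map (@step_inv Q1) (gamma x).2))) = x0.
Proof. by have := sv_inv (gv x); rewrite ge. Qed.

Lemma W_closed u : pvalid u -> closed_at src tgt x0 (W u).
Proof.
move=> Hu; have [H1 H2] := giv (pend u).
rewrite /closed_at WE /wvalid /wend /= eqxx /= !sv_cat gv ge.
by rewrite -pvalidE Hu pend_map H1 !last_catm ge pend_map H2 eqxx.
Qed.

Lemma closed_nil : closed_at src tgt x0 (x0, [::]).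
Proof. by rewrite /closed_at /wvalid /wend /= eqxx. Qed.

Lemma F_nil : F (x0, [::]) = 0.
Proof.
have := HF.2 _ _ closed_nil closed_nil; rewrite /wcat /= => H.
have : F (x0,[::]) + F (x0,[::]) - F (x0,[::]) = 0 by rewrite -H subrr.
by rewrite addrK.
Qed.

Lemma phi_nil x : phi (x, [::]) = 0.
Proof.
rewrite /phi -F_nil; apply: HF.1; first exact: W_closed.
  exact: closed_nil.
rewrite WE /=.
have := @hom_cancel (gamma x).2 x0 [::] [::]; rewrite /= !cats0; apply.
by have [H1 _] := giv x; rewrite sv_cat gv ge H1.
Qed.

Lemma closed_cat w1 w2 : closed_at src tgt x0 w1 -> closed_at src tgt x0 w2 ->
  closed_at src tgt x0 (wcat w1 w2).
Proof.
case: w1 w2 => x1 l1 [x2 l2]; rewrite /closed_at /wvalid /wend /wcat /=.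
case/and3P => H1 /eqP E1 /eqP H3; case/and3P => H4 /eqP E2 /eqP H6; subst x1 x2.
by rewrite sv_cat H1 H3 H4 last_catm H3 H6 eqxx.
Qed.

Lemma inv_inv l : rev (map (@step_inv Q1) (rev (map (@step_inv Q1) l))) = l.
Proof.
rewrite map_rev revK -map_comp.
by elim: l => //= s l ->; case: s => a [].
Qed.

Lemma phi_cat u v : pvalid v -> pvalid u -> pend v = u.1 ->
  phi (v.1, v.2 ++ u.2) = phi v + phi u.
Proof.
move=> Hv Hu Hp; have [Hc Hpc] := pvalid_cat Hv Hu Hp.
have Hcl := closed_cat (W_closed Hv) (W_closed Hu).
rewrite /phi -HF.2; try exact: W_closed.
symmetry; apply: HF.1 => //; first exact: W_closed.
move: Hcl; rewrite /wcat !WE /= Hpc Hp map_cat.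
set g := (gamma u.1).2.
set p := (gamma v.1).2 ++ [seq (a, true) | a <- v.2].
set q := [seq (a, true) | a <- u.2] ++ rev [seq step_inv i | i <- (gamma (pend u)).2].
set l := rev [seq step_inv i | i <- g].
have -> : ((gamma v.1).2 ++ [seq (a, true) | a <- v.2] ++ l) ++ g ++ q
  = p ++ l ++ rev (map (@step_inv Q1) l) ++ q.
  by rewrite /l inv_inv /p -!catA.
rewrite /closed_at /wvalid /= => /andP [Hw _].
rewrite (_ : forall a b c d : seq (step Q1), a ++ (b ++ c) ++ d = (a ++ b) ++ (c ++ d)); last by move=> *; rewrite -!catA.
exact: hom_cancel.
Qed.



Definition vh (h : qpath n Q1 -> A) (l : combo n Q1 k) := \sum_(c <- l) c.2 *: h c.1.

Lemma okP (l : combo n Q1 k) : combo_ok src tgt l -> forall c, c \in l -> pvalid c.1.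
Proof. by case/andP => _ /allP H c /H. Qed.

Lemma min_ends (l : combo n Q1 k) c d : minimal_relation src tgt e nu l -> c \in l -> d \in l ->
  d.1.1 = c.1.1 /\ pend d.1 = pend c.1.
Proof.
case=> Hok Hne Hnz H0 Hmin Hc Hd.
pose P := fun d : qpath n Q1 * k => (d.1.1 == c.1.1) && (pend d.1 == pend c.1).
suff: all P l by move/allP/(_ _ Hd) => /andP [/eqP -> /eqP ->].
apply/negPn/negP => HnP.
have Hval : combo_val e nu (filter P l) = 0.
  have -> : combo_val e nu (filter P l) = e (pend c.1) * combo_val e nu l * e c.1.1.
    rewrite /combo_val big_filter mulr_sumr mulr_suml big_mkcond; apply: eq_bigr => d' _.
    rewrite -scalerAr -scalerAl e_nupath /P andbC.
    case: (pend d'.1 == pend c.1) => /=; rewrite ?mul0r ?scaler0 // nupath_e.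
    by case: ifP; rewrite ?scaler0.
  by rewrite H0 mulr0 mul0r.
have := Hmin (map P l); rewrite size_map -filter_mask => /(_ erefl) H.
have Hne' : filter P l != [::].
  apply/eqP => E; have : c \in filter P l by rewrite mem_filter /P !eqxx Hc.
  by rewrite E.
have Hlt : (size (filter P l) < size l)%N.
  rewrite size_filter ltn_neqAle count_size andbT; apply: contra HnP.
  by rewrite all_count.
by move: (H Hne' Hlt); rewrite Hval eqxx.
Qed.

Lemma phi_min (l : combo n Q1 k) c d : minimal_relation src tgt e nu l -> c \in l -> d \in l ->
  phi c.1 = phi d.1.
Proof.
move=> Hm Hc Hd; have [E1 E2] := min_ends Hm Hc Hd.
have [Hok _ _ _ _] := Hm.
have Wc := W_closed (okP Hok Hc); have Wd := W_closed (okP Hok Hd).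
apply: HF.1 => //.
move: Wc Wd; rewrite !WE E1 E2 /closed_at /wvalid /= => /andP [Wc _] /andP [Wd _].
apply: rst_step.
have := hs_ctx (x:=x0) (p:=(gamma c.1.1).2)
  (q:=rev (map (@step_inv Q1) (gamma (pend c.1)).2))
  (@hg_rel _ _ src tgt _ _ e nu l c.1 d.1 Hm (map_f fst Hc) (map_f fst Hd)).
apply => //=; rewrite /wend /= ?ge ?E1 ?ge //.
Qed.



Definition psi u := phi u *: np u.

Lemma vh_filter0 h (l : combo n Q1 k) : vh h (filter (fun c => c.2 != 0) l) = vh h l.
Proof.
rewrite /vh big_filter big_mkcond; apply: eq_bigr => c _.
by case: (c.2 =P 0) => [->|]; rewrite ?scale0r.
Qed.

Lemma vh_mask h (l : combo n Q1 k) m : size m = size l ->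
  vh h l = vh h (mask m l) + vh h (mask (map negb m) l).
Proof.
rewrite /vh; elim: l m => [|c l IH] [|b m] //=; first by rewrite !big_nil addr0.
case=> Hs; case: b => /=; rewrite !big_cons (IH m Hs) ?addrA //.
by congr (_ + _); rewrite addrC.
Qed.

Lemma size_mask2 (l : combo n Q1 k) (m : bitseq) : size m = size l ->
  (size (mask m l) + size (mask (map negb m) l) = size l)%N.
Proof.
elim: l m => [|c l IH] [|b m] //= [Hs]; case: b => /=; rewrite -(IH m Hs) //.
by rewrite addnS.
Qed.

Lemma combo_ok_mask (l : combo n Q1 k) m : combo_ok src tgt l -> combo_ok src tgt (mask m l).
Proof.
case/andP => Hu Ha; rewrite /combo_ok map_mask mask_uniq //=.
by apply/allP => c /mem_mask Hc; exact: (allP Ha).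
Qed.

Lemma homog_aux m : forall l : combo n Q1 k, (size l <= m)%N -> combo_ok src tgt l ->
  vh np l = 0 -> vh psi l = 0.
Proof.
elim: m => [|m IH] l.
  by case: l => // _ _ _; rewrite /vh big_nil.
move=> Hs Hok H0.
case: (boolP (all (fun c => c.2 != 0) l)) => Hnz; last first.
  rewrite -vh_filter0; apply: IH; rewrite ?vh_filter0 //.
    move: Hnz; rewrite size_filter all_count => Hc.
    have := count_size (fun c => c.2 != 0) l.
    move: Hc Hs; set a := count _ _ => H1 H2 H3.
    have H : (a < size l)%N by rewrite ltn_neqAle H3 andbT.
    by rewrite -ltnS (leq_trans H H2).
  by rewrite filter_mask combo_ok_mask.
case: (altP (l =P [::])) => [->|Hne]; first by rewrite /vh big_nil.
case: (classic (minimal_relation src tgt e nu l)) => Hmin.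
  have [c0 Hc0] : exists c0, c0 \in l.
    by case: l Hne {Hs Hok H0 Hnz Hmin} => // c l' _; exists c; rewrite inE eqxx.
  rewrite /vh big_seq.
  under eq_bigr => c Hc do rewrite /psi (phi_min Hmin Hc Hc0) scalerA mulrC -scalerA.
  by rewrite -big_seq -scaler_sumr -/(vh np l) H0 scaler0.
have [bm Hbm] : exists bm : bitseq, ~ (size bm = size l -> mask bm l != [::] ->
    (size (mask bm l) < size l)%N -> combo_val e nu (mask bm l) != 0).
  by apply: not_all_ex_not => Hall; apply: Hmin; split.
have Hsz : size bm = size l by case: (size bm =P size l) => // H; exfalso; apply: Hbm => /H.
have Hne1 : mask bm l != [::].
  by apply: contraT => /negPn H; exfalso; apply: Hbm => _; rewrite H.
have Hlt : (size (mask bm l) < size l)%N.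
  by apply: contraT => H; exfalso; apply: Hbm => _ _; rewrite (negbTE H).
have Hv : vh np (mask bm l) = 0.
  by apply/eqP; apply: contraT => H; exfalso; apply: Hbm => _ _ _; exact: H.
have Hsz2 := size_mask2 Hsz.
have Hv2 : vh np (mask (map negb bm) l) = 0.
  by move: H0; rewrite (vh_mask _ Hsz) Hv add0r.
have Hp : (0 < size (mask bm l))%N by rewrite lt0n size_eq0.
rewrite (vh_mask _ Hsz) !IH ?addr0 ?combo_ok_mask //.
  move: Hsz2 Hp Hs; set a := size (mask bm l); set b := size (mask _ l); lia.
move: Hlt Hs; set a := size (mask bm l); lia.
Qed.



Lemma homog (l : combo n Q1 k) : combo_ok src tgt l -> vh np l = 0 -> vh psi l = 0.
Proof. exact: (@homog_aux _ l (leqnn _)). Qed.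

Definition cf (l : combo n Q1 k) p := \sum_(c <- l | c.1 == p) c.2.

Lemma vh_support h (l : combo n Q1 k) (s : seq (qpath n Q1)) : uniq s ->
  {subset map fst l <= s} -> \sum_(p <- s) cf l p *: h p = vh h l.
Proof.
move=> Us Ss; rewrite /vh /cf.
under eq_bigr => p _ do rewrite scaler_suml big_mkcond.
rewrite exchange_big big_seq [RHS]big_seq; apply: eq_bigr => c Hc.
rewrite -big_mkcond -big_filter (@eq_filter _ _ (pred1 c.1)); last by move=> p /=; rewrite eq_sym.
by rewrite filter_pred1_uniq ?big_seq1 // Ss // map_f.
Qed.

Definition vall (l : combo n Q1 k) := all (fun c => pvalid c.1) l.

Lemma WD (l1 l2 : combo n Q1 k) : vall l1 -> vall l2 -> vh np l1 = vh np l2 ->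
  vh psi l1 = vh psi l2.
Proof.
move=> V1 V2 Heq.
pose s := undup (map fst (l1 ++ l2)).
pose lm := map (fun p => (p, cf l1 p - cf l2 p)) s.
have Hs1 : {subset map fst l1 <= s}.
  by move=> p Hp; rewrite mem_undup map_cat mem_cat Hp.
have Hs2 : {subset map fst l2 <= s}.
  by move=> p Hp; rewrite mem_undup map_cat mem_cat Hp orbT.
have Hlm : forall h, vh h lm = vh h l1 - vh h l2.
  move=> h; rewrite /vh big_map /=.
  under eq_bigr => p _ do rewrite scalerBl.
  by rewrite sumrB !vh_support ?undup_uniq.
have Hfst : map fst lm = s by rewrite /lm -map_comp map_id.
have Hok : combo_ok src tgt lm.
  rewrite /combo_ok Hfst undup_uniq /=; apply/allP => c.
  move/(map_f fst); rewrite Hfst mem_undup => /mapP [d Hd ->].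
  by move: Hd; rewrite mem_cat => /orP [] Hd; [exact: (allP V1) | exact: (allP V2)].
by apply/eqP; rewrite -subr_eq0 -Hlm homog // Hlm Heq subrr.
Qed.



Hypothesis Hsurj : forall a : A, exists l : combo n Q1 k,
  combo_ok src tgt l /\ a = combo_val e nu l.

Lemma exP a : exists l : combo n Q1 k, combo_ok src tgt l && (a == combo_val e nu l).
Proof. by have [l [H1 H2]] := Hsurj a; exists l; rewrite H1 H2 eqxx. Qed.

Definition pick a := xchoose (exP a).
Definition D a := vh psi (pick a).

Lemma pickP a : combo_ok src tgt (pick a) /\ a = vh np (pick a).
Proof. by have /andP [H1 /eqP H2] := xchooseP (exP a). Qed.

Lemma ok_vall l : combo_ok src tgt l -> vall l.
Proof. by case/andP. Qed.

Lemma DE l : vall l -> D (vh np l) = vh psi l.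
Proof.
move=> V; have [H1 H2] := pickP (vh np l).
by apply: WD; rewrite -?H2 // ok_vall.
Qed.

Lemma vh_lin h c (l1 l2 : combo n Q1 k) :
  vh h (map (fun d => (d.1, c * d.2)) l1 ++ l2) = c *: vh h l1 + vh h l2.
Proof.
rewrite /vh big_cat big_map scaler_sumr; congr (_ + _).
by apply: eq_bigr => d _; rewrite scalerA.
Qed.

Lemma D_lin c a b : D (c *: a + b) = c *: D a + D b.
Proof.
have [Oa Ea] := pickP a; have [Ob Eb] := pickP b.
have -> : c *: a + b = vh np (map (fun d => (d.1, c * d.2)) (pick a) ++ pick b).
  by rewrite vh_lin -Ea -Eb.
rewrite DE ?vh_lin //.
rewrite /vall all_cat all_map; apply/andP; split; last exact: ok_vall.
by apply/allP => d /(allP (ok_vall Oa)).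
Qed.

Definition prodl (la lb : combo n Q1 k) : combo n Q1 k :=
  flatten (map (fun c => map (fun d => ((d.1.1, d.1.2 ++ c.1.2), c.2 * d.2))
     (filter (fun d => pend d.1 == c.1.1) lb)) la).

Lemma vh_prod h la lb : vh h (prodl la lb) =
  \sum_(c <- la) \sum_(d <- lb | pend d.1 == c.1.1) (c.2 * d.2) *: h (d.1.1, d.1.2 ++ c.1.2).
Proof.
rewrite /vh /prodl big_flatten big_map; apply: eq_bigr => c _.
by rewrite big_map big_filter.
Qed.

Lemma vh_mul h1 h2 (la lb : combo n Q1 k) : vh h1 la * vh h2 lb =
  \sum_(c <- la) \sum_(d <- lb) (c.2 * d.2) *: (h1 c.1 * h2 d.1).
Proof.
rewrite /vh mulr_suml; apply: eq_bigr => c _; rewrite mulr_sumr; apply: eq_bigr => d _.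
by rewrite -scalerAl -scalerAr scalerA.
Qed.

Lemma prod_vall la lb : vall la -> vall lb -> vall (prodl la lb).
Proof.
move=> Va Vb; apply/allP => x /flatten_mapP [c Hc] /mapP [d].
rewrite mem_filter => /andP [/eqP Hp Hd] ->.
by have [] := pvalid_cat (allP Vb _ Hd) (allP Va _ Hc) Hp.
Qed.

Lemma D_mul a b : D (a * b) = D a * b + a * D b.
Proof.
have [Oa Ea] := pickP a; have [Ob Eb] := pickP b.
have -> : D a * b + a * D b = vh psi (pick a) * vh np (pick b) + vh np (pick a) * vh psi (pick b).
  by rewrite -Ea -Eb.
have -> : a * b = vh np (prodl (pick a) (pick b)).
  rewrite {1}Ea {1}Eb vh_mul vh_prod; apply: eq_big => // c _.
  rewrite [RHS]big_mkcond; apply: eq_bigr => d _.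
  by rewrite nupath_mul; case: ifP => _; rewrite ?scaler0.
rewrite DE ?prod_vall ?ok_vall // vh_prod !vh_mul -big_split.
rewrite big_seq [RHS]big_seq; apply: eq_bigr => c Hc.
rewrite -big_split big_mkcond big_seq [RHS]big_seq; apply: eq_bigr => d Hd /=.
rewrite /psi -scalerDr -scalerAl -scalerAr -scalerDl nupath_mul.
case: eqP => Hp; last by rewrite !scaler0.
rewrite phi_cat ?(allP (ok_vall Ob) _ Hd) ?(allP (ok_vall Oa) _ Hc) //.
by rewrite addrC.
Qed.

Lemma D_e i : D (e i) = 0.
Proof.
have -> : e i = vh np [:: ((i, [::]), 1)] by rewrite /vh big_seq1 scale1r.
by rewrite DE // /vh big_seq1 scale1r /psi phi_nil scale0r.
Qed.

Lemma D_path u : pvalid u -> D (np u) = phi u *: np u.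
Proof.
move=> Hu.
have -> : np u = vh np [:: (u, 1)] by rewrite /vh big_seq1 scale1r.
by rewrite DE /vall /= ?Hu // /vh !big_seq1 !scale1r.
Qed.



Lemma exists_D : exists D0, der0 e D0 /\ tilde_der src tgt e nu gamma F D0.
Proof.
exists D; split; first by split; [exact: D_lin | exact: D_mul | exact: D_e].
by move=> u Hu; exact: D_path.
Qed.

End Walks.

Lemma lin_big (k : fieldType) (A : falgType k) (D0 : A -> A) :
  (forall c a b, D0 (c *: a + b) = c *: D0 a + D0 b) ->
  forall (T : Type) (r : seq T) (f : T -> k) (g : T -> A),
  D0 (\sum_(i <- r) f i *: g i) = \sum_(i <- r) f i *: D0 (g i).
Proof.
move=> HD T r f g.
have D00 : D0 0 = 0.
  have := HD 1 0 0; rewrite !scale1r addr0 => H.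
  have : D0 0 + D0 0 - D0 0 = 0 by rewrite -H subrr.
  by rewrite addrK.
elim: r => [|x r IH]; rewrite ?big_nil // !big_cons.
by rewrite HD IH.
Qed.

Theorem mainTheorem4 (k : closedFieldType) (A : falgType k) (n : nat)
  (Q1 : finType) (src tgt : Q1 -> 'I_n) (e : 'I_n -> A) (nu : Q1 -> A)
  (x0 : 'I_n) (T : {set Q1}) (gamma : 'I_n -> walk n Q1) :
  complete_primitive_orthogonal e ->
  basic_wrt e ->
  connected_algebra A ->
  no_oriented_cycles src tgt ->
  admissible_presentation src tgt e nu ->
  maximal_tree src tgt T ->
  (forall x, minimal_tree_walk src tgt T x0 x (gamma x)) ->
  (* theta_nu is well defined *)
  (forall F, pi1_hom src tgt e nu x0 F ->
     exists D, der0 e D /\ tilde_der src tgt e nu gamma F D) /\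
  (* theta_nu is additive *)
  (forall F G DF DG DFG,
     pi1_hom src tgt e nu x0 F -> pi1_hom src tgt e nu x0 G ->
     der0 e DF -> der0 e DG -> der0 e DFG ->
     tilde_der src tgt e nu gamma F DF -> tilde_der src tgt e nu gamma G DG ->
     tilde_der src tgt e nu gamma (fun w => F w + G w) DFG ->
     int0 e (fun a => DFG a - DF a - DG a)) /\
  (* theta_nu is k-homogeneous *)
  (forall (c : k) F DF DcF,
     pi1_hom src tgt e nu x0 F ->
     der0 e DF -> der0 e DcF ->
     tilde_der src tgt e nu gamma F DF ->
     tilde_der src tgt e nu gamma (fun w => c * F w) DcF ->
     int0 e (fun a => DcF a - c *: DF a)) /\
  (* theta_nu preserves brackets: [theta f, theta g] = theta [f, g] = 0 *)
  (forall F G DF DG,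
     pi1_hom src tgt e nu x0 F -> pi1_hom src tgt e nu x0 G ->
     der0 e DF -> der0 e DG ->
     tilde_der src tgt e nu gamma F DF -> tilde_der src tgt e nu gamma G DG ->
     int0 e (der_bracket DF DG)).
Proof.
move=> [Hsum He1 He0 Hprim] _ _ _ [Hnu Hsurj _] _ Hmt.
have Hg1 x : wvalid src tgt (gamma x) by case: (Hmt x).
have Hg2 x : (gamma x).1 = x0 by case: (Hmt x).
have Hg3 x : wend src tgt (gamma x) = x by case: (Hmt x).
have Z : forall D0 : A -> A, (forall a, D0 a = 0) -> int0 e D0.
  move=> D0 HD0; exists (fun _ => 0) => a.
  by rewrite HD0 big1 ?mul0r ?mulr0 ?subr0 // => i _; rewrite scale0r.
pose wv u := wcat (wcat (gamma u.1) (path_walk u)) (winv src tgt (gamma (pend src tgt u))).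
have Hspan a : exists l : combo n Q1 k, vall src tgt l /\ a = vh (nupath e nu) l.
  by have [l [/andP [_ H1] H2]] := Hsurj a; exists l.
split.
  move=> F HF; exact: (exists_D He1 He0 Hnu Hg1 Hg2 Hg3 HF Hsurj).
split.
  move=> F G DF DG DFG _ _ [LF _ _] [LG _ _] [LFG _ _] TF TG TFG.
  apply: Z => a; have [l [Vl ->]] := Hspan a.
  rewrite /vh /= (lin_big LFG) (lin_big LF) (lin_big LG) -!sumrB big_seq big1 // => c Hc.
  rewrite TF ?TG ?TFG ?(allP Vl _ Hc) //.
  by rewrite scalerDl scalerDr addrAC addrK subrr.
split.
  move=> c F DF DcF _ [LF _ _] [LcF _ _] TF TcF.
  apply: Z => a; have [l [Vl ->]] := Hspan a.
  rewrite /vh /= (lin_big LF) (lin_big LcF) scaler_sumr -sumrB big_seq big1 // => d Hd.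
  rewrite TF ?TcF ?(allP Vl _ Hd) //.
  by rewrite !scalerA mulrCA subrr.
move=> F G DF DG _ _ [LF _ _] [LG _ _] TF TG.
apply: Z => a; have [l [Vl ->]] := Hspan a.
have EG : DG (\sum_(c <- l) c.2 *: nupath e nu c.1) =
    \sum_(c <- l) (c.2 * G (wv c.1)) *: nupath e nu c.1.
  rewrite (lin_big LG) big_seq [RHS]big_seq; apply: eq_bigr => c Hc.
  by rewrite TG ?(allP Vl _ Hc) // scalerA.
have EF : DF (\sum_(c <- l) c.2 *: nupath e nu c.1) =
    \sum_(c <- l) (c.2 * F (wv c.1)) *: nupath e nu c.1.
  rewrite (lin_big LF) big_seq [RHS]big_seq; apply: eq_bigr => c Hc.
  by rewrite TF ?(allP Vl _ Hc) // scalerA.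
rewrite /der_bracket /vh /= EG EF (lin_big LF) (lin_big LG) -sumrB big_seq big1 // => c Hc.
rewrite TF ?TG ?(allP Vl _ Hc) //.
by rewrite !scalerA mulrAC subrr.
Qed.
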